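(* Let $\lambda\neq0$ and $\xi=e_{12}-e_{14}+\lambda e_2$. On $\mathbb R^4$ use the global coordinates $\tilde x^1=2\lambda x^1+(x^2+x^4)^2$, $\tilde x^2=(x^2+x^4)/\lambda$, $\tilde x^3=x^3$, $\tilde x^4=\lambda x^4+x^1(x^2+x^4)+(x^2+x^4)^3/(3\lambda)$. Then a smooth covector field $A$ on $\mathbb R^4$ satisfies $L_\xi A=0$ if and only if there are smooth functions $C_1,C_2,C_3,B$ of $(\tilde x^1,\tilde x^3,\tilde x^4)\in\mathbb R^3$ such that $$A_1=C_2\tilde x^2+C_3,\quad A_2=\tfrac12C_2(\tilde x^2)^2+C_3\tilde x^2+C_1,\quad A_3=B,\quad A_4=A_2+C_2 .$$
   Context: Work in $\mathbb R^4$ with Galilean (Cartesian) coordinates $x^1,x^2,x^3,x^4$ of Minkowski space (metric $\mathrm{diag}(-1,-1,-1,1)$). A potential on an open set $U\subseteq\mathbb R^4$ is a smooth covector field $A=A_i\,dx^i$; its components $A_i$ are always those with respect to the coordinates $x^i$, even when written as functions of other variables. For a vector field $\xi=\xi^k\partial_k$ the Lie derivative is $(L_\xi A)_i=\xi^k\partial_kA_i+A_k\partial_i\xi^k$. The vector fields used are, by components $(\xi^1,\xi^2,\xi^3,\xi^4)$: $e_1=(1,0,0,0)$, $e_2=(0,1,0,0)$, $e_3=(0,0,1,0)$, $e_4=(0,0,0,1)$, $e_{12}=(-x^2,x^1,0,0)$, $e_{13}=(x^3,0,-x^1,0)$, $e_{23}=(0,-x^3,x^2,0)$, $e_{14}=(x^4,0,0,x^1)$,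 $e_{24}=(0,x^4,0,x^2)$, $e_{34}=(0,0,x^4,x^3)$. A potential admits a family of vector fields if $L_\xi A=0$ for each $\xi$ in it (equivalently for every element of their linear span). ''Functions'' are smooth real functions; $\mathrm{ch}=\cosh$, $\mathrm{sh}=\sinh$. *)

(* Defs.v *)
From Stdlib Require Import Reals.
From Coquelicot Require Import Coquelicot.
Open Scope R_scope.

Definition R4 : Type := (R * R * R * R)%type.
Definition R3 : Type := (R * R * R)%type.

Definition coord4 (i : nat) (x : R4) : R :=
  let '(a, b, c, d) := x in
  match i with 1 => a | 2 => b | 3 => c | 4 => d | _ => 0 end.

Definition set4 (i : nat) (t : R) (x : R4) : R4 :=
  let '(a, b, c, d) := x in
  match i with
  | 1 => (t, b, c, d) | 2 => (a, t, c, d)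
  | 3 => (a, b, t, d) | 4 => (a, b, c, t) | _ => x end.

Definition coord3 (i : nat) (x : R3) : R :=
  let '(a, b, c) := x in
  match i with 1 => a | 2 => b | 3 => c | _ => 0 end.

Definition set3 (i : nat) (t : R) (x : R3) : R3 :=
  let '(a, b, c) := x in
  match i with
  | 1 => (t, b, c) | 2 => (a, t, c) | 3 => (a, b, t) | _ => x end.

Definition pd4 (i : nat) (f : R4 -> R) (x : R4) : R :=
  Derive (fun t => f (set4 i t x)) (coord4 i x).
Definition pd3 (i : nat) (f : R3 -> R) (x : R3) : R :=
  Derive (fun t => f (set3 i t x)) (coord3 i x).

Fixpoint Ck4 (k : nat) (f : R4 -> R) : Prop :=
  (forall x, continuous f x) /\
  match k with
  | O => True
  | S k' => (forall i x, (1 <= i <= 4)%nat -> ex_derive (fun t => f (set4 i t x)) (coord4 i x))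
            /\ (forall i, (1 <= i <= 4)%nat -> Ck4 k' (pd4 i f))
  end.
Fixpoint Ck3 (k : nat) (f : R3 -> R) : Prop :=
  (forall x, continuous f x) /\
  match k with
  | O => True
  | S k' => (forall i x, (1 <= i <= 3)%nat -> ex_derive (fun t => f (set3 i t x)) (coord3 i x))
            /\ (forall i, (1 <= i <= 3)%nat -> Ck3 k' (pd3 i f))
  end.

Definition smooth4 (f : R4 -> R) : Prop := forall k, Ck4 k f.
Definition smooth3 (f : R3 -> R) : Prop := forall k, Ck3 k f.

(* Vector fields / covector fields: component functions indexed 1..4. *)
Definition field := nat -> R4 -> R.

Definition lie (xi A : field) (i : nat) (x : R4) : R :=
  sum_f 1 4 (fun k => xi k x * pd4 k (A i) x + A k x * pd4 i (xi k) x).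

Definition vf_of (f1 f2 f3 f4 : R4 -> R) : field :=
  fun k => match k with 1 => f1 | 2 => f2 | 3 => f3 | 4 => f4 | _ => fun _ => 0 end.

Definition x1 (x : R4) := coord4 1 x.
Definition x2 (x : R4) := coord4 2 x.
Definition x3 (x : R4) := coord4 3 x.
Definition x4 (x : R4) := coord4 4 x.

Definition e2 : field := vf_of (fun _ => 0) (fun _ => 1) (fun _ => 0) (fun _ => 0).
Definition e12 : field := vf_of (fun x => - x2 x) x1 (fun _ => 0) (fun _ => 0).
Definition e14 : field := vf_of x4 (fun _ => 0) (fun _ => 0) x1.

Definition vf_add (u v : field) : field := fun k x => u k x + v k x.
Definition vf_scal (c : R) (u : field) : field := fun k x => c * u k x.

Definition xi_field (lam : R) : field :=
  vf_add (vf_add e12 (vf_scal (-1) e14)) (vf_scal lam e2).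

Definition tx1 (lam : R) (x : R4) := 2 * lam * x1 x + (x2 x + x4 x) ^ 2.
Definition tx2 (lam : R) (x : R4) := (x2 x + x4 x) / lam.
Definition tx3 (lam : R) (x : R4) := x3 x.
Definition tx4 (lam : R) (x : R4) :=
  lam * x4 x + x1 x * (x2 x + x4 x) + (x2 x + x4 x) ^ 3 / (3 * lam).

(* Main.v *)
Require Import Defs.
From Stdlib Require Import Reals Lra Lia FunctionalExtensionality.
From Coquelicot Require Import Coquelicot.
Open Scope R_scope.

Definition cont (q : R -> R) (t0 : R) := forall e, 0 < e ->
  exists d, 0 < d /\ forall u, Rabs u < d -> Rabs (q (t0 + u) - q t0) < e.

Lemma cont_const c t0 : cont (fun _ => c) t0.
Proof. intros e He. exists 1. split. lra. intros. rewrite Rminus_diag, Rabs_R0. lra. Qed.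

Lemma cont_of_derive g t0 d : is_derive g t0 d -> cont g t0.
Proof.
  intros H. apply is_derive_Reals in H.
  pose proof (derivable_continuous_pt g t0 (exist _ d H)) as Hc.
  intros e He. destruct (Hc e He) as [a [Ha Hx]]. exists a. split; auto.
  intros u Hu. destruct (Req_dec u 0) as [->|Hu0].
  - rewrite Rplus_0_r, Rminus_diag, Rabs_R0. lra.
  - apply (Hx (t0+u)). split. split. exact I. lra. simpl. unfold R_dist.
    replace (t0 + u - t0) with u by ring. exact Hu.
Qed.

Definition C1_4 (f : R4 -> R) :=
  (forall j x, (1 <= j <= 4)%nat -> ex_derive (fun t => f (set4 j t x)) (coord4 j x)) /\
  (forall j x, (1 <= j <= 4)%nat -> continuous (pd4 j f) x).

Lemma set4_set4 j s t x : (1 <= j <= 4)%nat -> set4 j t (set4 j s x) = set4 j t x.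
Proof. intros Hj. destruct x as [[[a b] c] d].
  destruct j as [|[|[|[|[|j]]]]]; try lia; reflexivity. Qed.

Lemma coord4_set4 j t x : (1 <= j <= 4)%nat -> coord4 j (set4 j t x) = t.
Proof. intros Hj. destruct x as [[[a b] c] d].
  destruct j as [|[|[|[|[|j]]]]]; try lia; reflexivity. Qed.

Lemma pd_line f (H : C1_4 f) j W s : (1 <= j <= 4)%nat ->
  is_derive (fun t => f (set4 j t W)) s (pd4 j f (set4 j s W)).
Proof.
  intros Hj. destruct H as [Hd _]. specialize (Hd j (set4 j s W) Hj).
  rewrite coord4_set4 in Hd by exact Hj.
  assert (Hd' : ex_derive (fun t => f (set4 j t W)) s).
  { eapply ex_derive_ext; [|exact Hd]. intros t. simpl. rewrite set4_set4 by exact Hj. reflexivity. }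
  unfold pd4. rewrite coord4_set4 by exact Hj.
  rewrite (Derive_ext _ (fun t => f (set4 j t W))).
  apply Derive_correct. exact Hd'.
  intros t. rewrite set4_set4 by exact Hj. reflexivity.
Qed.

Lemma ball_R (a b e : R) : Rabs (b - a) < e -> ball a e b.
Proof. intros H. unfold ball. simpl. unfold AbsRing_ball, abs, minus, plus, opp. simpl. exact H. Qed.

Lemma ball_R' (a b e : R) : ball a e b -> Rabs (b - a) < e.
Proof. unfold ball. simpl. unfold AbsRing_ball, abs, minus, plus, opp. simpl. auto. Qed.

Lemma ball_set4 j (a c : R) (v w : R4) (e : R) : (1 <= j <= 4)%nat ->
  Rabs (c - a) < e ->
  (forall k, (1 <= k <= 4)%nat -> Rabs (coord4 k w - coord4 k v) < e) ->
  ball (set4 j a v) e (set4 j c w).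
Proof.
  intros Hj Hc Hk. destruct v as [[[v1 v2] v3] v4]. destruct w as [[[w1 w2] w3] w4].
  pose proof (Hk 1%nat ltac:(lia)) as K1. pose proof (Hk 2%nat ltac:(lia)) as K2.
  pose proof (Hk 3%nat ltac:(lia)) as K3. pose proof (Hk 4%nat ltac:(lia)) as K4.
  simpl in K1, K2, K3, K4.
  destruct j as [|[|[|[|[|j]]]]]; try lia; simpl;
  repeat split; apply ball_R; assumption.
Qed.

Lemma cont_ball (h : R4 -> R) z0 : continuous h z0 ->
  forall e, 0 < e -> exists d, 0 < d /\ forall z, ball z0 d z -> Rabs (h z - h z0) < e.
Proof.
  intros Hc e He. apply filterlim_locally with (eps := mkposreal e He) in Hc.
  destruct Hc as [d Hd]. exists d. split. apply cond_pos.
  intros z Hz. apply ball_R'. apply (Hd z Hz).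
Qed.

Lemma est P P0 q d e : 0 < e -> Rabs (P - P0) < e / (2 * (Rabs d + 1)) ->
  Rabs (q - d) < Rmin 1 (e / (2 * (Rabs P0 + 1))) -> Rabs (P * q - P0 * d) < e.
Proof.
  intros He H1 H2.
  pose proof (Rabs_pos d) as Hd. pose proof (Rabs_pos P0) as HP.
  pose proof (Rmin_l 1 (e / (2 * (Rabs P0 + 1)))) as M1.
  pose proof (Rmin_r 1 (e / (2 * (Rabs P0 + 1)))) as M2.
  replace (P * q - P0 * d) with ((P - P0) * q + P0 * (q - d)) by ring.
  eapply Rle_lt_trans. apply Rabs_triang. rewrite !Rabs_mult.
  assert (Hq : Rabs q <= Rabs d + 1).
  { replace q with (d + (q - d)) by ring. eapply Rle_trans. apply Rabs_triang. lra. }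
  assert (A1 : Rabs (P - P0) * Rabs q <= e / 2).
  { apply Rle_trans with (e / (2 * (Rabs d + 1)) * (Rabs d + 1)).
    apply Rmult_le_compat; try apply Rabs_pos; lra.
    right. field. lra. }
  assert (A2 : Rabs P0 * Rabs (q - d) < e / 2).
  { apply Rle_lt_trans with (Rabs P0 * (e / (2 * (Rabs P0 + 1)))).
    apply Rmult_le_compat_l; lra.
    apply Rmult_lt_reg_r with (2 * (Rabs P0 + 1)). lra.
    replace (Rabs P0 * (e / (2 * (Rabs P0 + 1))) * (2 * (Rabs P0 + 1))) with (Rabs P0 * e)
      by (field; lra). nra. }
  lra.
Qed.

Lemma term f (H : C1_4 f) j (Hj : (1 <= j <= 4)%nat) g d q1 q2 q3 q4 t0 :
  is_derive g t0 d -> cont q1 t0 -> cont q2 t0 -> cont q3 t0 -> cont q4 t0 ->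
  is_derive (fun t => f (set4 j (g t) (q1 t, q2 t, q3 t, q4 t))
                    - f (set4 j (g t0) (q1 t, q2 t, q3 t, q4 t))) t0
    (pd4 j f (set4 j (g t0) (q1 t0, q2 t0, q3 t0, q4 t0)) * d).
Proof.
  intros Hg c1 c2 c3 c4.
  set (z0 := set4 j (g t0) (q1 t0, q2 t0, q3 t0, q4 t0)).
  set (P0 := pd4 j f z0).
  pose proof Hg as Hg'. apply is_derive_Reals in Hg'.
  apply is_derive_Reals. intros e He.
  set (e2 := e / (2 * (Rabs d + 1))).
  set (e1 := Rmin 1 (e / (2 * (Rabs P0 + 1)))).
  assert (He2 : 0 < e2). { unfold e2. pose proof (Rabs_pos d). apply Rdiv_lt_0_compat; lra. }
  assert (He1 : 0 < e1). { unfold e1. apply Rmin_pos. lra. pose proof (Rabs_pos P0).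
    apply Rdiv_lt_0_compat; lra. }
  destruct (cont_ball (pd4 j f) z0 (proj2 H j z0 Hj) e2 He2) as [d2 [Hd2 Hb]].
  destruct (Hg' e1 He1) as [d1 Hd1].
  destruct (cont_of_derive _ _ _ Hg d2 Hd2) as [dg [Hdg Hgc]].
  destruct (c1 d2 Hd2) as [k1 [Hk1 K1]].
  destruct (c2 d2 Hd2) as [k2 [Hk2 K2]].
  destruct (c3 d2 Hd2) as [k3 [Hk3 K3]].
  destruct (c4 d2 Hd2) as [k4 [Hk4 K4]].
  assert (Hpos : 0 < Rmin d1 (Rmin dg (Rmin k1 (Rmin k2 (Rmin k3 k4))))).
  { repeat apply Rmin_pos; try assumption. apply cond_pos. }
  exists (mkposreal _ Hpos). intros u Hu0 Hu. simpl in Hu.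
  pose proof (Rmin_l d1 (Rmin dg (Rmin k1 (Rmin k2 (Rmin k3 k4))))) as m1.
  pose proof (Rmin_r d1 (Rmin dg (Rmin k1 (Rmin k2 (Rmin k3 k4))))) as m.
  pose proof (Rmin_l dg (Rmin k1 (Rmin k2 (Rmin k3 k4)))) as m2.
  pose proof (Rmin_r dg (Rmin k1 (Rmin k2 (Rmin k3 k4)))) as m'.
  pose proof (Rmin_l k1 (Rmin k2 (Rmin k3 k4))) as m3.
  pose proof (Rmin_r k1 (Rmin k2 (Rmin k3 k4))) as m''.
  pose proof (Rmin_l k2 (Rmin k3 k4)) as m4.
  pose proof (Rmin_r k2 (Rmin k3 k4)) as m'''.
  pose proof (Rmin_l k3 k4) as m5. pose proof (Rmin_r k3 k4) as m6.
  set (W := (q1 (t0 + u), q2 (t0 + u), q3 (t0 + u), q4 (t0 + u))).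
  destruct (MVT_gen (fun s => f (set4 j s W)) (g t0) (g (t0 + u))
              (fun s => pd4 j f (set4 j s W))) as [c [Hc Heq]].
  { intros x _. apply pd_line; assumption. }
  { intros x _. apply continuity_pt_filterlim.
    apply (ex_derive_continuous (K:=R_AbsRing) (V:=R_NormedModule) (fun s => f (set4 j s W))).
    eexists. apply pd_line; assumption. }
  cbv beta in Heq |- *.
  set (P := pd4 j f (set4 j c W)).
  fold W. rewrite Heq. fold P.
  replace ((P * (g (t0 + u) - g t0) - (f (set4 j (g t0) (q1 t0, q2 t0, q3 t0, q4 t0)) -
     f (set4 j (g t0) (q1 t0, q2 t0, q3 t0, q4 t0)))) / u)
    with (P * ((g (t0 + u) - g t0) / u)) by (field; exact Hu0).
  apply est; [exact He| |].
  - apply Hb. unfold z0, W. apply ball_set4; [exact Hj| |].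
    + assert (Hg2 : Rabs (g (t0 + u) - g t0) < d2) by (apply Hgc; lra).
      unfold Rmin, Rmax in Hc.
      destruct (Rle_dec (g t0) (g (t0 + u))).
      * rewrite Rabs_right in Hg2 by lra. rewrite Rabs_right by lra. lra.
      * rewrite Rabs_left in Hg2 by lra. apply Rabs_def1; lra.
    + intros k Hk. destruct k as [|[|[|[|[|k]]]]]; try lia; simpl.
      apply K1; lra. apply K2; lra. apply K3; lra. apply K4; lra.
  - apply Hd1. exact Hu0. lra.
Qed.

Lemma is_derive_eq (f : R -> R) x l l' : l = l' -> is_derive f x l -> is_derive f x l'.
Proof. intros ->. auto. Qed.

Lemma chain4 f (H : C1_4 f) g1 g2 g3 g4 t0 d1 d2 d3 d4 :
  is_derive g1 t0 d1 -> is_derive g2 t0 d2 -> is_derive g3 t0 d3 -> is_derive g4 t0 d4 ->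
  is_derive (fun t => f (g1 t, g2 t, g3 t, g4 t)) t0
    (pd4 1 f (g1 t0, g2 t0, g3 t0, g4 t0) * d1 + pd4 2 f (g1 t0, g2 t0, g3 t0, g4 t0) * d2
     + pd4 3 f (g1 t0, g2 t0, g3 t0, g4 t0) * d3 + pd4 4 f (g1 t0, g2 t0, g3 t0, g4 t0) * d4).
Proof.
  intros D1 D2 D3 D4.
  pose proof (cont_of_derive _ _ _ D1) as C1.
  pose proof (cont_of_derive _ _ _ D2) as C2.
  pose proof (cont_of_derive _ _ _ D3) as C3.
  pose proof (cont_of_derive _ _ _ D4) as C4.
  pose proof (term f H 1 ltac:(lia) g1 d1 (fun _ => 0) g2 g3 g4 t0 D1 (cont_const _ _) C2 C3 C4) as T1.
  pose proof (term f H 2 ltac:(lia) g2 d2 (fun _ => g1 t0) (fun _ => 0) g3 g4 t0 D2 (cont_const _ _) (cont_const _ _) C3 C4) as T2.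
  pose proof (term f H 3 ltac:(lia) g3 d3 (fun _ => g1 t0) (fun _ => g2 t0) (fun _ => 0) g4 t0 D3 (cont_const _ _) (cont_const _ _) (cont_const _ _) C4) as T3.
  pose proof (term f H 4 ltac:(lia) g4 d4 (fun _ => g1 t0) (fun _ => g2 t0) (fun _ => g3 t0) (fun _ => 0) t0 D4 (cont_const _ _) (cont_const _ _) (cont_const _ _) (cont_const _ _)) as T4.
  simpl in T1, T2, T3, T4.
  pose proof (is_derive_plus _ _ _ _ _ (is_derive_plus _ _ _ _ _ (is_derive_plus _ _ _ _ _ T1 T2) T3) T4) as T.
  pose proof (is_derive_plus _ _ _ _ _ T (is_derive_const (f (g1 t0, g2 t0, g3 t0, g4 t0)) t0)) as T'.
  refine (is_derive_eq _ _ _ _ _ (is_derive_ext _ _ _ _ _ T')).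
  - unfold plus, zero. simpl. ring.
  - intros t. unfold plus. simpl. ring.
Qed.

Definition flow (lam : R) (x : R4) (t : R) : R4 :=
 (x1 x - (x2 x + x4 x) * t - lam * t ^ 2 / 2,
  x2 x + lam * t + x1 x * t - (x2 x + x4 x) * t ^ 2 / 2 - lam * t ^ 3 / 6,
  x3 x,
  x4 x - x1 x * t + (x2 x + x4 x) * t ^ 2 / 2 + lam * t ^ 3 / 6).

Definition Dir (lam : R) (A : field) (i : nat) (z : R4) : R :=
  - (x2 z + x4 z) * pd4 1 (A i) z + (x1 z + lam) * pd4 2 (A i) z
  + 0 * pd4 3 (A i) z + (- x1 z) * pd4 4 (A i) z.

Lemma flow_deriv lam A i p t : C1_4 (A i) ->
  is_derive (fun t => A i (flow lam p t)) t (Dir lam A i (flow lam p t)).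
Proof.
  intros H. unfold flow.
  eapply is_derive_eq; [|apply (chain4 (A i) H); auto_derive; auto; reflexivity].
  unfold Dir, x1, x2, x3, x4. simpl. field.
Qed.

Definition dxiv (i k : nat) : R :=
  match i, k with
  | 2%nat, 1%nat => -1 | 4%nat, 1%nat => -1 | 1%nat, 2%nat => 1 | 1%nat, 4%nat => -1
  | _, _ => 0 end.

Lemma dxi lam i k x : pd4 i (xi_field lam k) x = dxiv i k.
Proof.
  destruct x as [[[a b] c] d]. unfold pd4. apply is_derive_unique.
  unfold xi_field, vf_add, vf_scal, e12, e14, e2, vf_of, x1, x2, x3, x4.
  destruct i as [|[|[|[|[|i]]]]]; destruct k as [|[|[|[|[|k]]]]]; simpl;
  auto_derive; auto; simpl; ring.
Qed.

Definition Sx (A : field) (i : nat) (x : R4) : R :=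
  match i with 1%nat => A 2%nat x - A 4%nat x | 2%nat => - A 1%nat x
  | 4%nat => - A 1%nat x | _ => 0 end.

Lemma lie_expand lam A i x : lie (xi_field lam) A i x = Dir lam A i x + Sx A i x.
Proof.
  unfold lie, sum_f. simpl. rewrite !dxi.
  unfold Dir, Sx, xi_field, vf_add, vf_scal, e12, e14, e2, vf_of, x1, x2, x3, x4.
  destruct x as [[[a b] c] d]. simpl.
  destruct i as [|[|[|[|[|i]]]]]; simpl; ring.
Qed.

Lemma chain4g f (H : C1_4 f) (g : R -> R4) t0 d1 d2 d3 d4 :
  is_derive (fun t => coord4 1 (g t)) t0 d1 -> is_derive (fun t => coord4 2 (g t)) t0 d2 ->
  is_derive (fun t => coord4 3 (g t)) t0 d3 -> is_derive (fun t => coord4 4 (g t)) t0 d4 ->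
  is_derive (fun t => f (g t)) t0
    (pd4 1 f (g t0) * d1 + pd4 2 f (g t0) * d2 + pd4 3 f (g t0) * d3 + pd4 4 f (g t0) * d4).
Proof.
  intros D1 D2 D3 D4.
  pose proof (chain4 f H _ _ _ _ t0 d1 d2 d3 d4 D1 D2 D3 D4) as C.
  assert (E : forall t, (coord4 1 (g t), coord4 2 (g t), coord4 3 (g t), coord4 4 (g t)) = g t).
  { intros t. destruct (g t) as [[[a b] c] d]. reflexivity. }
  cbv beta in C. rewrite E in C. eapply is_derive_ext; [|exact C]. intros t. simpl. rewrite E. reflexivity.
Qed.

Lemma Ck4_cont k f : Ck4 k f -> forall x, continuous f x.
Proof. destruct k; simpl; tauto. Qed.
Lemma Ck3_cont k f : Ck3 k f -> forall x, continuous f x.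
Proof. destruct k; simpl; tauto. Qed.

Lemma C1_of_Ck4 k f : Ck4 (S k) f -> C1_4 f.
Proof.
  simpl. intros [_ [Hd Hp]]. split. exact Hd.
  intros j x Hj. apply (Ck4_cont k). apply Hp. exact Hj.
Qed.

Lemma smooth_C1 f : smooth4 f -> C1_4 f.
Proof. intros H. apply (C1_of_Ck4 0). apply H. Qed.

Lemma Ck3_lin k : forall f g a b, Ck3 k f -> Ck3 k g -> Ck3 k (fun y => a * f y + b * g y).
Proof.
  induction k; intros f g a b Hf Hg.
  - simpl in *. split; auto. intros x.
    apply (continuous_plus (fun y => a * f y) (fun y => b * g y)).
    apply (continuous_scal_r a f x). apply Hf.
    apply (continuous_scal_r b g x). apply Hg.
  - pose proof (Ck3_cont _ _ Hf) as cf. pose proof (Ck3_cont _ _ Hg) as cg.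
    destruct Hf as [_ [Df Pf]]. destruct Hg as [_ [Dg Pg]].
    split; [|split].
    + intros x.
      apply (continuous_plus (fun y => a * f y) (fun y => b * g y)).
      apply (continuous_scal_r a f x). apply cf.
      apply (continuous_scal_r b g x). apply cg.
    + intros i x Hi. apply (ex_derive_plus (fun t => a * f (set3 i t x)) (fun t => b * g (set3 i t x))).
      apply ex_derive_scal. apply Df; auto. apply ex_derive_scal. apply Dg; auto.
    + intros i Hi.
      replace (pd3 i (fun y => a * f y + b * g y)) with (fun y => a * pd3 i f y + b * pd3 i g y).
      apply IHk; auto.
      apply functional_extensionality. intros y. unfold pd3.
      rewrite Derive_plus. rewrite !Derive_scal. reflexivity.
      apply ex_derive_scal. apply Df; auto. apply ex_derive_scal. apply Dg; auto.
Qed.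

Definition Psi (lam : R) (y : R3) : R4 :=
  (fst (fst y) * / (2 * lam), snd y * (- / lam), snd (fst y), snd y * / lam).

Lemma continuous_pair {U V W : UniformSpace} (a : U -> V) (b : U -> W) x :
  continuous a x -> continuous b x -> continuous (fun y => (a y, b y)) x.
Proof.
  intros Ha Hb. apply filterlim_locally. intros eps.
  apply filterlim_locally with (eps := eps) in Ha.
  apply filterlim_locally with (eps := eps) in Hb.
  generalize (filter_and _ _ Ha Hb). apply filter_imp. intros y [H1 H2]. split; auto.
Qed.

Lemma Psi_cont lam y : continuous (Psi lam) y.
Proof.
  destruct y as [[a b] c]. unfold Psi.
  repeat apply continuous_pair.
  - apply (continuous_scal_l (fun y : R3 => fst (fst y)) (/ (2 * lam))).
    apply (continuous_comp fst fst). apply continuous_fst. apply continuous_fst.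
  - apply (continuous_scal_l (fun y : R3 => snd y) (- / lam)). apply continuous_snd.
  - apply (continuous_comp fst snd). apply continuous_fst. apply continuous_snd.
  - apply (continuous_scal_l (fun y : R3 => snd y) (/ lam)). apply continuous_snd.
Qed.

Definition ca lam (j : nat) : R := match j with 1%nat => / (2 * lam) | 2%nat => 1 | _ => - / lam end.
Definition ka (j : nat) : nat := match j with 1%nat => 1%nat | 2%nat => 3%nat | _ => 2%nat end.
Definition cb lam (j : nat) : R := match j with 3%nat => / lam | _ => 0 end.
Definition kb (j : nat) : nat := match j with 3%nat => 4%nat | _ => 1%nat end.

Lemma pd3_comp lam f (H : C1_4 f) j : (1 <= j <= 3)%nat ->
  pd3 j (fun y => f (Psi lam y)) =
  fun y => ca lam j * pd4 (ka j) f (Psi lam y) + cb lam j * pd4 (kb j) f (Psi lam y).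
Proof.
  intros Hj. apply functional_extensionality. intros y. unfold pd3. apply is_derive_unique.
  destruct y as [[a b] c].
  destruct j as [|[|[|[|j]]]]; try lia; simpl;
  (eapply is_derive_eq; [|apply (chain4g f H); simpl; auto_derive; auto; reflexivity]);
  simpl; ring.
Qed.

Lemma Ck3_comp lam k : forall f, Ck4 k f -> Ck3 k (fun y => f (Psi lam y)).
Proof.
  induction k; intros f Hf.
  - simpl. split; auto. intros y. apply (continuous_comp (Psi lam) f). apply Psi_cont.
    apply (Ck4_cont 0 f Hf).
  - pose proof (C1_of_Ck4 _ _ Hf) as H1.
    split; [|split].
    + intros y. apply (continuous_comp (Psi lam) f). apply Psi_cont.
      apply (Ck4_cont _ f Hf).
    + intros i y Hi. unfold pd3.
      pose proof (pd3_comp lam f H1 i Hi) as E. unfold pd3 in E.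
      eexists. apply Derive_correct.
      destruct y as [[a b] c].
      destruct i as [|[|[|[|j]]]]; try lia; simpl;
      (eexists; apply (chain4g f H1); simpl; auto_derive; auto; reflexivity).
    + intros i Hi. rewrite (pd3_comp lam f H1 i Hi).
      destruct Hf as [_ [_ Hp]].
      apply Ck3_lin; apply IHk; apply Hp;
      destruct i as [|[|[|[|j]]]]; simpl; lia.
Qed.

Ltac fl := unfold tx1, tx2, tx3, tx4, flow, Psi, x1, x2, x3, x4; simpl.

Lemma flow_tx1 lam x t : tx1 lam (flow lam x t) = tx1 lam x.
Proof. destruct x as [[[a b] c] d]. fl. field. Qed.
Lemma flow_tx3 lam x t : tx3 lam (flow lam x t) = tx3 lam x.
Proof. destruct x as [[[a b] c] d]. fl. reflexivity. Qed.
Lemma flow_tx4 lam x t : lam <> 0 -> tx4 lam (flow lam x t) = tx4 lam x.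
Proof. intros. destruct x as [[[a b] c] d]. fl. field. auto. Qed.
Lemma flow_tx2 lam x t : lam <> 0 -> tx2 lam (flow lam x t) = tx2 lam x + t.
Proof. intros. destruct x as [[[a b] c] d]. fl. field. auto. Qed.
Lemma flow0 lam x : flow lam x 0 = x.
Proof. destruct x as [[[a b] c] d]. fl. repeat match goal with |- (_,_) = (_,_) => f_equal end; field. Qed.
Lemma flow_Psi lam x : lam <> 0 ->
  flow lam (Psi lam (tx1 lam x, tx3 lam x, tx4 lam x)) (tx2 lam x) = x.
Proof. intros. destruct x as [[[a b] c] d]. fl. repeat match goal with |- (_,_) = (_,_) => f_equal end; field; auto. Qed.

Lemma deriv0_const (h : R -> R) : (forall t, is_derive h t 0) -> forall a b, h a = h b.
Proof.
  intros H a b. destruct (MVT_gen h a b (fun _ => 0)) as [c [_ Hc]].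
  - intros; apply H.
  - intros x _. apply continuity_pt_filterlim.
    apply (ex_derive_continuous (K:=R_AbsRing) (V:=R_NormedModule) h). eexists. apply H.
  - lra.
Qed.

Theorem mainTheorem4 (lam : R) (Hlam : lam <> 0) (A : field)
  (HA : forall i, (1 <= i <= 4)%nat -> smooth4 (A i)) :
  (forall i x, (1 <= i <= 4)%nat -> lie (xi_field lam) A i x = 0) <->
  exists C1 C2 C3 B : R3 -> R,
    smooth3 C1 /\ smooth3 C2 /\ smooth3 C3 /\ smooth3 B /\
    forall x : R4,
      let y : R3 := (tx1 lam x, tx3 lam x, tx4 lam x) in
      A 1%nat x = C2 y * tx2 lam x + C3 y /\
      A 2%nat x = / 2 * C2 y * (tx2 lam x) ^ 2 + C3 y * tx2 lam x + C1 y /\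
      A 3%nat x = B y /\
      A 4%nat x = A 2%nat x + C2 y.
Proof.
  assert (HC : forall i, (1 <= i <= 4)%nat -> C1_4 (A i)) by (intros; apply smooth_C1; auto).
  assert (FD : forall i p t, (1 <= i <= 4)%nat ->
            is_derive (fun t => A i (flow lam p t)) t (Dir lam A i (flow lam p t)))
    by (intros; apply flow_deriv; auto).
  split.
  - intros Hlie.
    assert (HD : forall i z, (1 <= i <= 4)%nat -> Dir lam A i z = - Sx A i z).
    { intros i z Hi. pose proof (Hlie i z Hi) as E. rewrite lie_expand in E. lra. }
    exists (fun y => A 2%nat (Psi lam y)),
           (fun y => 1 * A 4%nat (Psi lam y) + (-1) * A 2%nat (Psi lam y)),
           (fun y => A 1%nat (Psi lam y)), (fun y => A 3%nat (Psi lam y)).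
    split; [|split; [|split; [|split]]].
    1,3,4: intros k; apply Ck3_comp; apply HA; lia.
    { intros k. apply Ck3_lin; apply Ck3_comp; apply HA; lia. }
    intros x. cbv zeta.
    set (p := Psi lam (tx1 lam x, tx3 lam x, tx4 lam x)).
    set (T := tx2 lam x).
    assert (Ex : flow lam p T = x) by (apply flow_Psi; auto).
    assert (E0 : flow lam p 0 = p) by apply flow0.
    set (c2 := A 4%nat (flow lam p 0) - A 2%nat (flow lam p 0)).
    assert (H4 : forall t, A 4%nat (flow lam p t) - A 2%nat (flow lam p t) = c2).
    { intros t. apply (deriv0_const (fun t => A 4%nat (flow lam p t) - A 2%nat (flow lam p t))).
      intros s. eapply is_derive_eq; [|apply (is_derive_minus _ _ _ _ _ (FD 4%nat p s ltac:(lia)) (FD 2%nat p s ltac:(lia)))].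
      rewrite !HD by lia. unfold Sx, minus, plus, opp. simpl. ring. }
    set (a1 := A 1%nat (flow lam p 0)).
    assert (H1 : forall t, A 1%nat (flow lam p t) - c2 * t = a1).
    { intros t. replace a1 with (A 1%nat (flow lam p 0) - c2 * 0) by (unfold a1; ring).
      apply (deriv0_const (fun t => A 1%nat (flow lam p t) - c2 * t)).
      intros s. assert (Dl : is_derive (fun t => c2 * t) s c2) by (auto_derive; auto; ring).
      eapply is_derive_eq; [|apply (is_derive_minus _ _ _ _ _ (FD 1%nat p s ltac:(lia)) Dl)].
      rewrite !HD by lia. unfold Sx, minus, plus, opp. simpl.
      pose proof (H4 s). lra. }
    set (a2 := A 2%nat (flow lam p 0)).
    assert (H2 : forall t, A 2%nat (flow lam p t) - c2 * t ^ 2 / 2 - a1 * t = a2).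
    { intros t. replace a2 with (A 2%nat (flow lam p 0) - c2 * 0 ^ 2 / 2 - a1 * 0) by (unfold a2; field).
      apply (deriv0_const (fun t => A 2%nat (flow lam p t) - c2 * t ^ 2 / 2 - a1 * t)).
      intros s. assert (Dq : is_derive (fun t => c2 * t ^ 2 / 2) s (c2 * s)) by (auto_derive; auto; field).
      assert (Dl : is_derive (fun t => a1 * t) s a1) by (auto_derive; auto; ring).
      eapply is_derive_eq; [|apply (is_derive_minus _ _ _ _ _ (is_derive_minus _ _ _ _ _ (FD 2%nat p s ltac:(lia)) Dq) Dl)].
      rewrite !HD by lia. unfold Sx, minus, plus, opp. simpl.
      pose proof (H1 s). field_simplify. lra. }
    assert (H3 : forall t, A 3%nat (flow lam p t) = A 3%nat (flow lam p 0)).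
    { intros t. apply (deriv0_const (fun t => A 3%nat (flow lam p t))).
      intros s. eapply is_derive_eq; [|apply (FD 3%nat p s ltac:(lia))].
      rewrite HD by lia. unfold Sx. simpl. ring. }
    pose proof (H1 T) as G1. pose proof (H2 T) as G2. pose proof (H3 T) as G3. pose proof (H4 T) as G4.
    rewrite Ex in G1, G2, G3, G4.
    assert (Ec : 1 * A 4%nat p + -1 * A 2%nat p = c2) by (unfold c2; rewrite E0; ring).
    assert (Ea1 : A 1%nat p = a1) by (unfold a1; rewrite E0; reflexivity).
    assert (Ea2 : A 2%nat p = a2) by (unfold a2; rewrite E0; reflexivity).
    split; [|split; [|split]].
    + rewrite Ec, Ea1, <- G1. ring.
    + rewrite Ec, Ea1, Ea2, <- G2. field.
    + rewrite G3, E0. reflexivity.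
    + rewrite Ec. lra.
  - intros [C1 [C2 [C3 [B [_ [_ [_ [_ HF]]]]]]]] i x Hi.
    rewrite lie_expand.
    set (y := (tx1 lam x, tx3 lam x, tx4 lam x)).
    set (T := tx2 lam x).
    assert (Hf : forall t, let z := flow lam x t in
       A 1%nat z = C2 y * (T + t) + C3 y /\
       A 2%nat z = / 2 * C2 y * (T + t) ^ 2 + C3 y * (T + t) + C1 y /\
       A 3%nat z = B y /\ A 4%nat z = A 2%nat z + C2 y).
    { intros t. cbv zeta. pose proof (HF (flow lam x t)) as K. cbv zeta in K.
      rewrite flow_tx1, flow_tx3, flow_tx4, flow_tx2 in K by auto. exact K. }
    pose proof (FD i x 0 Hi) as D. rewrite flow0 in D.
    pose proof (HF x) as K. cbv zeta in K. fold y T in K.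
    destruct i as [|[|[|[|[|i]]]]]; try lia.
    + assert (D' : is_derive (fun t => A 1%nat (flow lam x t)) 0 (C2 y)).
      { eapply is_derive_ext. intros t. symmetry. apply (proj1 (Hf t)).
        auto_derive; auto. ring. }
      apply is_derive_unique in D'. apply is_derive_unique in D. rewrite D in D'.
      unfold Sx. simpl. destruct K as [K1 [K2 [K3 K4]]]. lra.
    + assert (D' : is_derive (fun t => A 2%nat (flow lam x t)) 0 (C2 y * T + C3 y)).
      { eapply is_derive_ext. intros t. symmetry. apply (proj1 (proj2 (Hf t))).
        auto_derive; auto. field. }
      apply is_derive_unique in D'. apply is_derive_unique in D. rewrite D in D'.
      unfold Sx. simpl. destruct K as [K1 [K2 [K3 K4]]]. lra.
    + assert (D' : is_derive (fun t => A 3%nat (flow lam x t)) 0 0).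
      { eapply is_derive_ext. intros t. symmetry. apply (proj1 (proj2 (proj2 (Hf t)))).
        auto_derive; auto. }
      apply is_derive_unique in D'. apply is_derive_unique in D. rewrite D in D'.
      unfold Sx. simpl. lra.
    + assert (D' : is_derive (fun t => A 4%nat (flow lam x t)) 0 (C2 y * T + C3 y)).
      { eapply is_derive_ext. intros t. symmetry.
        destruct (Hf t) as [_ [Q2 [_ Q4]]]. cbv zeta in Q2, Q4. rewrite Q4, Q2. reflexivity.
        auto_derive; auto. field. }
      apply is_derive_unique in D'. apply is_derive_unique in D. rewrite D in D'.
      unfold Sx. simpl. destruct K as [K1 [K2 [K3 K4]]]. lra.
Qed.
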